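(* Let $(X,d)$ be a compact metric space and let $C(X)$ denote the space of all continuous functions $f:X\to\mathbb{R}$. If $X$ is uncountable, then there exists no reproducing kernel Hilbert space $H$ of functions on $X$ such that $C(X)\subset H$.
   Context: A reproducing kernel Hilbert space (RKHS) on a set $X$ is a Hilbert space $H$ consisting of real-valued functions $f:X\to\mathbb{R}$ (with the pointwise vector space operations) such that for every $x\in X$ the point evaluation $f\mapsto f(x)$ is a continuous linear functional on $H$; equivalently, $H$ has a reproducing kernel $k:X\times X\to\mathbb{R}$ with $k(\cdot,x)\in H$ and $f(x)=\langle f,k(\cdot,x)\rangle_H$ for all $f\in H$, $x\in X$. The inclusion $C(X)\subset H$ is meant as sets of functions on $X$. *)

(* Defs.v *)
From HB Require Import structures.
From mathcomp Require Import all_boot all_order all_algebra.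
From mathcomp Require Import all_classical all_reals all_analysis.
Set Implicit Arguments. Unset Strict Implicit. Unset Printing Implicit Defensive.
Import Order.TTheory GRing.Theory Num.Theory.
Local Open Scope classical_set_scope.
Local Open Scope ring_scope.

Record RKHS (R : realType) (X : Type) := {
  rk_carrier : set (X -> R);
  rk_ip : (X -> R) -> (X -> R) -> R;
  rk_zero : rk_carrier (fun _ => 0);
  rk_lin : forall (a : R) f g, rk_carrier f -> rk_carrier g ->
      rk_carrier (fun x => a * f x + g x);
  rk_ip_sym : forall f g, rk_carrier f -> rk_carrier g -> rk_ip f g = rk_ip g f;
  rk_ip_lin : forall (a : R) f g h, rk_carrier f -> rk_carrier g -> rk_carrier h ->
      rk_ip (fun x => a * f x + g x) h = a * rk_ip f h + rk_ip g h;
  rk_ip_ge0 : forall f, rk_carrier f -> 0 <= rk_ip f f;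
  rk_ip_def : forall f, rk_carrier f -> rk_ip f f = 0 -> f = (fun _ => 0);
  rk_complete : forall u : nat -> (X -> R), (forall n, rk_carrier (u n)) ->
      (forall e : R, 0 < e -> exists N : nat, forall m n : nat, (N <= m)%N -> (N <= n)%N ->
          Num.sqrt (rk_ip (fun x => u m x - u n x) (fun x => u m x - u n x)) < e) ->
      exists g, rk_carrier g /\
        (forall e : R, 0 < e -> exists N : nat, forall n : nat, (N <= n)%N ->
          Num.sqrt (rk_ip (fun x => u n x - g x) (fun x => u n x - g x)) < e);
  rk_eval_cont : forall x : X, exists C : R, forall f, rk_carrier f ->
      `| f x | <= C * Num.sqrt (rk_ip f f)
}.

(* Main.v *)
Require Import Defs.
From HB Require Import structures.
From mathcomp Require Import all_boot all_order all_algebra.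
From mathcomp Require Import all_classical all_reals all_analysis.
From mathcomp Require Import ring lra zify.
Import Order.TTheory GRing.Theory Num.Theory numFieldNormedType.Exports.
Local Open Scope classical_set_scope.
Local Open Scope ring_scope.
Set Implicit Arguments. Unset Strict Implicit. Unset Printing Implicit Defensive.

Lemma C_lin' (R : realType) X (H : RKHS R X) a f g :
  rk_carrier H f -> rk_carrier H g -> rk_carrier H (fun x => a * f x + g x).
Proof. exact: rk_lin. Qed.

Lemma C_add (R : realType) X (H : RKHS R X) f g :
  rk_carrier H f -> rk_carrier H g -> rk_carrier H (fun x => f x + g x).
Proof.
move=> hf hg; have := rk_lin 1 hf hg.
by rewrite (_ : (fun x => 1 * f x + g x) = (fun x => f x + g x)) // funeqE => x; rewrite mul1r.
Qed.

Lemma C_scale (R : realType) X (H : RKHS R X) a f :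
  rk_carrier H f -> rk_carrier H (fun x => a * f x).
Proof.
move=> hf; have := rk_lin a hf (rk_zero H).
by rewrite (_ : (fun x => a * f x + 0) = (fun x => a * f x)) // funeqE => x; rewrite addr0.
Qed.

Lemma C_sub (R : realType) X (H : RKHS R X) f g :
  rk_carrier H f -> rk_carrier H g -> rk_carrier H (fun x => f x - g x).
Proof.
move=> hf hg; have := rk_lin (-1) hg hf.
by rewrite (_ : (fun x => -1 * g x + f x) = (fun x => f x - g x)) // funeqE => x; rewrite mulN1r addrC.
Qed.

Lemma ip0l (R : realType) X (H : RKHS R X) h :
  rk_carrier H h -> rk_ip H (fun _ => 0) h = 0.
Proof.
move=> hh; have := rk_ip_lin 1 (rk_zero H) (rk_zero H) hh.
rewrite (_ : (fun x : X => 1 * 0 + 0) = (fun _ => 0)); last by rewrite funeqE => x; rewrite mulr0 addr0.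
move=> E; have : rk_ip H (fun _ : X => 0) h * 1 = 0 by move: E; lra.
by rewrite mulr1.
Qed.

Lemma ipZDl (R : realType) X (H : RKHS R X) a f g h :
  rk_carrier H f -> rk_carrier H g -> rk_carrier H h ->
  rk_ip H (fun x => a * f x + g x) h = a * rk_ip H f h + rk_ip H g h.
Proof. exact: rk_ip_lin. Qed.

Lemma ipZl (R : realType) X (H : RKHS R X) a f h :
  rk_carrier H f -> rk_carrier H h ->
  rk_ip H (fun x => a * f x) h = a * rk_ip H f h.
Proof.
move=> hf hh; have := rk_ip_lin a hf (rk_zero H) hh.
rewrite ip0l // addr0.
by rewrite (_ : (fun x => a * f x + 0) = (fun x => a * f x)) // funeqE => x; rewrite addr0.
Qed.

Lemma ipDl (R : realType) X (H : RKHS R X) f g h :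
  rk_carrier H f -> rk_carrier H g -> rk_carrier H h ->
  rk_ip H (fun x => f x + g x) h = rk_ip H f h + rk_ip H g h.
Proof.
move=> hf hg hh; have := rk_ip_lin 1 hf hg hh; rewrite mul1r.
by rewrite (_ : (fun x => 1 * f x + g x) = (fun x => f x + g x)) // funeqE => x; rewrite mul1r.
Qed.

Lemma ipBl (R : realType) X (H : RKHS R X) f g h :
  rk_carrier H f -> rk_carrier H g -> rk_carrier H h ->
  rk_ip H (fun x => f x - g x) h = rk_ip H f h - rk_ip H g h.
Proof.
move=> hf hg hh; have := rk_ip_lin (-1) hg hf hh.
rewrite (_ : (fun x => -1 * g x + f x) = (fun x => f x - g x)); last by rewrite funeqE => x; rewrite mulN1r addrC.
by move=> ->; rewrite mulN1r addrC.
Qed.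

Lemma Q_lin (R : realType) X (H : RKHS R X) t f g :
  rk_carrier H f -> rk_carrier H g ->
  rk_ip H (fun x => t * f x + g x) (fun x => t * f x + g x) =
  t ^+ 2 * rk_ip H f f + 2 * t * rk_ip H f g + rk_ip H g g.
Proof.
move=> hf hg; have hc := rk_lin t hf hg.
rewrite ipZDl // (rk_ip_sym hf hc) (rk_ip_sym hg hc) !ipZDl // (rk_ip_sym hg hf).
ring.
Qed.

Lemma CS (R : realType) X (H : RKHS R X) f g :
  rk_carrier H f -> rk_carrier H g ->
  rk_ip H f g ^+ 2 <= rk_ip H f f * rk_ip H g g.
Proof.
move=> hf hg.
have [a0|an0] := eqVneq (rk_ip H f f) 0.
  have -> : f = (fun _ => 0) by exact: (rk_ip_def hf a0).
  rewrite ip0l // ip0l; last exact: rk_zero.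
  by rewrite expr2 !mul0r.
have apos : 0 < rk_ip H f f by rewrite lt_neqAle eq_sym an0 rk_ip_ge0.
set a := rk_ip H f f in apos an0 *; set b := rk_ip H f g; set c := rk_ip H g g.
have := rk_ip_ge0 (rk_lin (- b / a) hf hg).
rewrite Q_lin // -/a -/b -/c.
have -> : (- b / a) ^+ 2 * a + 2 * (- b / a) * b + c = c - b ^+ 2 / a.
  by field.
rewrite subr_ge0 ler_pdivrMr //.
by rewrite mulrC.
Qed.

Definition Nm (R : realType) X (H : RKHS R X) f := Num.sqrt (rk_ip H f f).

Lemma Nm_ge0 (R : realType) X (H : RKHS R X) f : 0 <= Nm H f.
Proof. exact: sqrtr_ge0. Qed.

Lemma Nm_sq (R : realType) X (H : RKHS R X) f : rk_carrier H f ->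
  Nm H f ^+ 2 = rk_ip H f f.
Proof. by move=> hf; rewrite /Nm sqr_sqrtr // rk_ip_ge0. Qed.

Lemma ip_le (R : realType) X (H : RKHS R X) f g :
  rk_carrier H f -> rk_carrier H g -> `|rk_ip H f g| <= Nm H f * Nm H g.
Proof.
move=> hf hg; have := CS hf hg; rewrite -(Nm_sq hf) -(Nm_sq hg).
have := Nm_ge0 H f; have := Nm_ge0 H g.
set b := rk_ip H f g; set u := Nm H f; set v := Nm H g => v0 u0.
rewrite -exprMn; have : 0 <= u * v by rewrite mulr_ge0.
set p := u * v => p0 h.
rewrite ler_norml; apply/andP; split; nra.
Qed.

Lemma Nm_lin (R : realType) X (H : RKHS R X) t f g :
  rk_carrier H f -> rk_carrier H g ->
  Nm H (fun x => t * f x + g x) <= `|t| * Nm H f + Nm H g.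
Proof.
move=> hf hg; have hc := rk_lin t hf hg.
have := Q_lin t hf hg; rewrite -(Nm_sq hf) -(Nm_sq hg) -(Nm_sq hc).
have := ip_le hf hg; have := Nm_ge0 H f; have := Nm_ge0 H g; have := Nm_ge0 H (fun x => t * f x + g x).
have := normr_ge0 t.
have tt : t ^+ 2 = `|t| ^+ 2 by rewrite real_normK // num_real.
rewrite tt.
set b := rk_ip H f g; set u := Nm H f; set v := Nm H g; set w := Nm H _.
move=> t0 w0 v0 u0 hb E.
have hb' : - (`|t| * u * v) <= t * b.
  have : `|t * b| <= `|t| * (u * v) by rewrite normrM ler_wpM2l.
  rewrite ler_norml => /andP[h1 _]; move: h1; rewrite mulrA; lra.
have : w ^+ 2 <= (`|t| * u + v) ^+ 2.
  rewrite E.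
  have : t * b <= `|t| * u * v.
    have : `|t * b| <= `|t| * (u * v) by rewrite normrM ler_wpM2l.
    rewrite ler_norml => /andP[_ h2]; move: h2; rewrite mulrA; lra.
  move=> h; nra.
have : 0 <= `|t| * u + v by rewrite addr_ge0 // mulr_ge0.
set s := `|t| * u + v => s0 h; nra.
Qed.

Lemma Nm_add (R : realType) X (H : RKHS R X) f g :
  rk_carrier H f -> rk_carrier H g ->
  Nm H (fun x => f x + g x) <= Nm H f + Nm H g.
Proof.
move=> hf hg; have := Nm_lin 1 hf hg; rewrite normr1 mul1r.
by rewrite (_ : (fun x => 1 * f x + g x) = (fun x => f x + g x)) // funeqE => x; rewrite mul1r.
Qed.

Lemma Nm_scale (R : realType) X (H : RKHS R X) t f :
  rk_carrier H f -> Nm H (fun x => t * f x) = `|t| * Nm H f.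
Proof.
move=> hf; have hs := C_scale t hf; rewrite /Nm ipZl // (rk_ip_sym hf hs) ipZl //.
rewrite mulrA -expr2 sqrtrM ?sqr_ge0 //.
by rewrite sqrtr_sqr.
Qed.

Lemma Nm_sub (R : realType) X (H : RKHS R X) f g :
  rk_carrier H f -> rk_carrier H g ->
  Nm H (fun x => f x - g x) <= Nm H f + Nm H g.
Proof.
move=> hf hg; have := Nm_lin (-1) hg hf; rewrite normrN normr1 mul1r.
rewrite (_ : (fun x => -1 * g x + f x) = (fun x => f x - g x)); last by rewrite funeqE => x; rewrite mulN1r addrC.
by rewrite addrC.
Qed.

Lemma Nm_subC (R : realType) X (H : RKHS R X) f g :
  rk_carrier H f -> rk_carrier H g ->
  Nm H (fun x => f x - g x) = Nm H (fun x => g x - f x).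
Proof.
move=> hf hg; have := Nm_scale (-1) (C_sub hf hg); rewrite normrN normr1 mul1r => <-.
by congr Nm; rewrite funeqE => x; rewrite mulN1r opprB.
Qed.

Lemma Nm_tri (R : realType) X (H : RKHS R X) f g h :
  rk_carrier H f -> rk_carrier H g -> rk_carrier H h ->
  Nm H (fun x => f x - g x) <= Nm H (fun x => f x - h x) + Nm H (fun x => h x - g x).
Proof.
move=> hf hg hh; have := Nm_add (C_sub hf hh) (C_sub hh hg).
by rewrite (_ : (fun x => f x - h x + (h x - g x)) = (fun x => f x - g x)) // funeqE => x; rewrite addrA subrK.
Qed.

Lemma cauchy_R (R : realType) (u : nat -> R) (r : nat -> R) :
  (forall k j, (k <= j)%N -> `|u j - u k| <= r k) ->
  (forall e, 0 < e -> exists k, r k < e) ->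
  exists l, (u n @[n --> \oo] --> l) /\ forall k, `|l - u k| <= r k.
Proof.
move=> hu hr.
have cu : cvg (u n @[n --> \oo]).
  apply: cauchy_cvg; apply: cauchy_exP => e e0.
  have [k hk] := hr e e0.
  exists (u k); apply: filterS (nbhs_infty_ge k) => n kn.
  rewrite -ball_normE /ball_ /= distrC.
  exact: le_lt_trans (hu _ _ kn) hk.
exists (lim (u n @[n --> \oo])); split; first exact: cu.
move=> k.
have h1 : (fun n => `|u n - u k|) @ \oo --> `|lim (u n @[n --> \oo]) - u k|.
  apply: cvg_norm; apply: cvgB => //; exact: cvg_cst.
apply: (cvgr_to_le h1); apply: filterS (nbhs_infty_ge k) => n kn.
exact: hu.
Qed.

Lemma dist3 (R : realType) (a b c d : R) :
  `|a - d| <= `|a - b| + `|b - c| + `|c - d|.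
Proof.
have -> : a - d = (a - b) + (b - c) + (c - d) by ring.
apply: le_trans (ler_normD _ _) _; rewrite lerD2r; exact: ler_normD.
Qed.

Definition unear (X : Type) (R : realType) (f g : X -> R) (r : R) :=
  forall x, `|f x - g x| <= r.


Lemma inv_step (R : realType) (k : nat) (a : R) :
  a <= (k.+1%:R)^-1 -> a / 2 <= (k.+2%:R)^-1.
Proof.
move=> h; apply: le_trans (_ : (k.+1%:R)^-1 / 2 <= _).
  by rewrite ler_pM2r.
rewrite -invfM lef_pV2 ?posrE ?mulr_gt0 // -natrM ler_nat; lia.
Qed.

Lemma small_inv (R : realType) (e : R) : 0 < e -> exists k : nat, (k.+1%:R)^-1 < e.
Proof.
move=> e0; exists (Num.truncn e^-1).
by rewrite -ltf_pV2 ?(posrE,divr_gt0)// invrK truncnS_gt.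
Qed.

Lemma step1 (R : realType) (X : pseudoMetricType R) (H : RKHS R X) :
  (forall f : X -> R, continuous f -> rk_carrier H f) ->
  exists M g0 r, 0 < r /\ continuous g0 /\ forall f, continuous f -> unear f g0 r ->
    forall d, 0 < d -> exists g, continuous g /\ Nm H g <= M /\ unear f g d.
Proof.
move=> hC.
case: (pselect (exists M g0 r, 0 < r /\ continuous g0 /\ forall f, continuous f -> unear f g0 r ->
    forall d, 0 < d -> exists g, continuous g /\ Nm H g <= M /\ unear f g d)) => // Hno; exfalso.
have bad : forall (M : R) (g0 : X -> R) r, 0 < r -> continuous g0 ->
  exists f, continuous f /\ unear f g0 r /\ exists d, 0 < d /\
    forall g, continuous g -> unear f g d -> M < Nm H g.
  move=> M g0 r r0 cg0; apply: contrapT => Hc; apply: Hno; exists M, g0, r.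
  split=> //; split=> // f cf ufg d d0.
  apply: contrapT => Hg; apply: Hc; exists f; split=> //; split=> //.
  exists d; split=> // g cg ug.
  rewrite ltNge; apply/negP => hle; apply: Hg; by exists g.
have hch : forall kp : nat * ((X -> R) * R), exists q : (X -> R) * R,
  continuous kp.2.1 -> 0 < kp.2.2 ->
  [/\ continuous q.1, unear q.1 kp.2.1 (kp.2.2 / 2), 0 < q.2, q.2 <= kp.2.2 / 2 &
     forall g, continuous g -> unear q.1 g q.2 -> kp.1%:R < Nm H g].
  case=> k [g0 r] /=.
  case: (pselect (continuous g0 /\ 0 < r)) => [[cg r0]|nh]; last first.
    by exists (g0, r) => cg r0; exfalso; apply: nh.
  have [f [cf [ufg [d [d0 hd]]]]] := bad k%:R g0 (r / 2) (divr_gt0 r0 (ltr0Sn _ 1)) cg.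
  exists (f, Num.min d (r / 2)) => _ _ /=; split => //.
  - by rewrite lt_min d0 divr_gt0.
  - by rewrite ge_min lexx orbT.
  - move=> g cg1 ug; apply: hd => // x; apply: le_trans (ug x) _; by rewrite ge_min lexx.
have [e he] := choice hch.
pose p := fix p (n : nat) : (X -> R) * R :=
  if n is k.+1 then e (k, p k) else ((fun _ : X => (0:R)), (1:R)).
have pS k : p k.+1 = e (k, p k) by [].
have inv : forall k, [/\ continuous (p k).1, 0 < (p k).2 & (p k).2 <= (k.+1%:R)^-1].
  elim=> [|k [ck rk rkb]].
    split => //=; first by move=> x; exact: cvg_cst.
    by rewrite invr1.
  have [c1 u1 r1 r1b _] := he (k, p k) ck rk.
  rewrite pS; split=> //.
  exact: le_trans r1b (inv_step rkb).
have nest0 : forall k i, unear (p (k + i)%N).1 (p k).1 ((p k).2 - (p (k + i)%N).2).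
  move=> k; elim=> [|i IH] x.
    by rewrite addn0 !subrr normr0.
  have [ci ri _] := inv (k + i)%N.
  have [c1 u1 r1 r1b _] := he ((k + i)%N, p (k + i)%N) ci ri.
  rewrite addnS pS /=.
  have := ler_normD ((e ((k + i)%N, p (k + i)%N)).1 x - (p (k + i)%N).1 x) ((p (k + i)%N).1 x - (p k).1 x).
  rewrite addrA subrK.
  move: (u1 x) (IH x) r1b => /=; lra.
have nest : forall k j, (k <= j)%N -> unear (p j).1 (p k).1 (p k).2.
  move=> k j kj x; rewrite -(subnKC kj).
  apply: le_trans (nest0 k (j - k)%N x) _.
  have [_ r0 _] := inv (k + (j - k))%N; lra.
have hr : forall eps : R, 0 < eps -> exists k, (p k).2 < eps.
  move=> eps eps0; have [k hk] := small_inv eps0; exists k.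
  have [_ _ hb] := inv k; exact: le_lt_trans hb hk.
have hl : forall x, exists l, ((p n).1 x @[n --> \oo] --> l) /\ forall k, `|l - (p k).1 x| <= (p k).2.
  move=> x; apply: cauchy_R => // k j kj; exact: nest.
have [F hF] := choice hl.
have cF : continuous F.
  move=> x; apply/cvgrPdist_lt => eps eps0.
  have [k hk] := hr (eps / 4) (divr_gt0 eps0 (ltr0Sn _ 3)).
  have [ck _ _] := inv k.
  have hc := (cvgrPdist_lt _ _).1 (ck x) (eps / 2) (divr_gt0 eps0 (ltr0Sn _ 1)).
  near=> y.
  have hy : `|(p k).1 x - (p k).1 y| < eps / 2 by near: y; exact: hc.
  have h1 := (hF x).2 k; have h2 := (hF y).2 k.
  have := dist3 (F x) ((p k).1 x) ((p k).1 y) (F y).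
  rewrite (distrC ((p k).1 y)).
  move: hy h1 h2 hk; lra.
pose k := (Num.truncn (Nm H F)).+1.
have [ck rk _] := inv k.
have [c1 u1 r1 r1b hbad] := he (k, p k) ck rk.
have := hbad F cF.
have : unear (e (k, p k)).1 F (e (k, p k)).2.
  move=> x; rewrite -pS distrC; exact: (hF x).2.
move=> hu /(_ hu) /=.
have := truncnS_gt (Nm H F); rewrite -/k; lra.
Unshelve. all: by end_near.
Qed.


Lemma eq0_small (R : realType) (a : R) : (forall e, 0 < e -> `|a| < e) -> a = 0.
Proof.
move=> h; apply/eqP; apply: contrapT => /negP an0.
have : 0 < `|a| by rewrite normr_gt0.
by move=> /h; rewrite ltxx.
Qed.

Lemma le_small (R : realType) (a b : R) : (forall e, 0 < e -> a <= b + e) -> a <= b.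
Proof.
move=> h; rewrite leNgt; apply/negP => ab.
have := h ((a - b) / 2); rewrite divr_gt0 ?subr_gt0 // => /(_ isT); lra.
Qed.

Lemma Nm0 (R : realType) X (H : RKHS R X) : Nm H (fun _ => 0) = 0.
Proof. by rewrite /Nm ip0l ?sqrtr0 //; exact: rk_zero. Qed.

Lemma cont_sub (R : realType) (X : pseudoMetricType R) (f g : X -> R) :
  continuous f -> continuous g -> continuous (fun x => f x - g x).
Proof. by move=> cf cg x; apply: cvgB; [exact: cf | exact: cg]. Qed.

Lemma cont_add (R : realType) (X : pseudoMetricType R) (f g : X -> R) :
  continuous f -> continuous g -> continuous (fun x => f x + g x).
Proof. by move=> cf cg x; apply: cvgD; [exact: cf | exact: cg]. Qed.

Lemma cont_scale (R : realType) (X : pseudoMetricType R) (c : R) (f : X -> R) :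
  continuous f -> continuous (fun x => c * f x).
Proof. by move=> cf x; apply: cvgMr; exact: cf. Qed.

Definition w (R : realType) (j : nat) : R := (2%:R ^+ j)^-1.

Lemma w_gt0 (R : realType) j : 0 < w R j.
Proof. by rewrite /w invr_gt0 exprn_gt0. Qed.

Lemma wS (R : realType) j : w R j.+1 = w R j / 2.
Proof. by rewrite /w exprS invfM mulrC. Qed.

Lemma wD (R : realType) l i : w R (l + i)%N = w R l * w R i.
Proof. by rewrite /w exprD invfM. Qed.

Lemma w0 (R : realType) : w R 0 = 1.
Proof. by rewrite /w expr0 invr1. Qed.

Lemma w_le (R : realType) j : w R j <= (j.+1%:R)^-1.
Proof.
rewrite /w lef_pV2 ?posrE ?exprn_gt0 // -natrX ler_nat; exact: ltn_expl.
Qed.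

Lemma inv_mono (R : realType) (k n : nat) : (k <= n)%N -> (n.+1%:R)^-1 <= (k.+1%:R)^-1 :> R.
Proof. by move=> kn; rewrite lef_pV2 ?posrE // ler_nat ltnS. Qed.

Lemma rE1 (R : realType) (a b c : R) : a - (b - c) = (a - b) + c.
Proof. by ring. Qed.
Lemma rE2 (R : realType) (a b c : R) : (a - b) - (a - c) = c - b.
Proof. by ring. Qed.
Lemma rE3 (R : realType) (a b : R) : a - b - a = - b.
Proof. by ring. Qed.
Lemma rE4 (R : realType) (a b c : R) : 4 * a * b * (1 - c / 2) = 4 * a * b * (1 - c) + 2 * a * (b * c).
Proof. by field. Qed.


Lemma bound (R : realType) (X : pseudoMetricType R) (H : RKHS R X) :
  (forall f : X -> R, continuous f -> rk_carrier H f) ->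
  exists K, forall f, continuous f -> (forall x, `|f x| <= 1) -> Nm H f <= K.
Proof.
move=> hC.
have [M [g0 [r [r0 [cg0 hs]]]]] := step1 hC.
have u00 : unear g0 g0 r by move=> x; rewrite subrr normr0 ltW.
have M0 : 0 <= M.
  have [g [_ [hg _]]] := hs g0 cg0 u00 1 ltr01.
  exact: le_trans (Nm_ge0 H g) hg.
have step2 : forall f, continuous f -> (forall x, `|f x| <= r) -> forall d, 0 < d ->
    exists g, continuous g /\ Nm H g <= 2 * M /\ unear f g d.
  move=> f cf hf d d0.
  have d2 : 0 < d / 2 by rewrite divr_gt0.
  have c1 := cont_add cg0 cf.
  have u1' : unear (fun x => g0 x + f x) g0 r.
    by move=> x; rewrite addrC addKr.
  have [g1 [cg1 [n1 u1]]] := hs _ c1 u1' (d / 2) d2.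
  have [g2 [cg2 [n2 u2]]] := hs _ cg0 u00 (d / 2) d2.
  exists (fun x => g1 x - g2 x); split; first exact: cont_sub.
  split.
    apply: le_trans (Nm_sub (hC _ cg1) (hC _ cg2)) _; lra.
  move=> x; have := u1 x; have := u2 x; rewrite /=.
  have -> : f x - (g1 x - g2 x) = (g0 x + f x - g1 x) - (g0 x - g2 x) by ring.
  move=> a b; apply: le_trans (ler_normB _ _) _; lra.
have step2' : forall j (h : X -> R), continuous h -> (forall x, `|h x| <= r * w R j) ->
    exists g, continuous g /\ Nm H g <= 2 * M * w R j /\ unear h g (r * w R j / 2).
  move=> j h ch hh.
  pose c : R := 2%:R ^+ j.
  have c0 : 0 < c by rewrite exprn_gt0.
  have wc : w R j = c^-1 by [].
  have hb : forall x, `|c * h x| <= r.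
    move=> x; rewrite normrM gtr0_norm //.
    have := hh x; rewrite wc => hx.
    have -> : r = c * (r * c^-1) by field; rewrite gt_eqF.
    by rewrite ler_pM2l.
  have [g' [cg' [ng' ug']]] := step2 _ (cont_scale (c:=c) ch) hb (r / 2) (divr_gt0 r0 (ltr0Sn _ 1)).
  exists (fun x => c^-1 * g' x); split; first exact: cont_scale.
  split.
    rewrite Nm_scale; last exact: hC.
    rewrite gtr0_norm ?invr_gt0 // wc.
    by rewrite [_ * c^-1]mulrC ler_pM2l ?invr_gt0.
  move=> x; have := ug' x; rewrite wc.
  have -> : h x - c^-1 * g' x = c^-1 * (c * h x - g' x) by field; rewrite gt_eqF.
  rewrite normrM gtr0_norm ?invr_gt0 // => hx.
  have -> : r * c^-1 / 2 = c^-1 * (r / 2) by ring.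
  by rewrite ler_pM2l ?invr_gt0.
have hch : forall jh : nat * (X -> R), exists g : X -> R,
    continuous jh.2 -> (forall x, `|jh.2 x| <= r * w R jh.1) ->
    [/\ continuous g, Nm H g <= 2 * M * w R jh.1 & unear jh.2 g (r * w R jh.1 / 2)].
  case=> j h /=.
  case: (pselect (continuous h /\ forall x, `|h x| <= r * w R j)) => [[ch hh]|nh]; last first.
    by exists h => a b; exfalso; apply: nh.
  have [g [? [? ?]]] := step2' j h ch hh; by exists g.
have [e he] := choice hch.
have step3 : forall f, continuous f -> (forall x, `|f x| <= r) -> Nm H f <= 4 * M.
  move=> f cf hf.
  pose h := fix h (n : nat) : X -> R :=
    if n is j.+1 then (fun x => h j x - e (j, h j) x) else f.
  have hS j : h j.+1 = (fun x => h j x - e (j, h j) x) by [].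
  have inv : forall j, continuous (h j) /\ forall x, `|h j x| <= r * w R j.
    elim=> [|j [cj hj]].
      by split => // x; rewrite w0 mulr1.
    have [c1 n1 u1] := he (j, h j) cj hj.
    rewrite hS; split; first exact: cont_sub.
    by move=> x; rewrite wS mulrA; exact: u1.
  have gb : forall j, Nm H (e (j, h j)) <= 2 * M * w R j.
    by move=> j; have [cj hj] := inv j; have [] := he (j, h j) cj hj.
  have ce : forall j, continuous (e (j, h j)).
    by move=> j; have [cj hj] := inv j; have [] := he (j, h j) cj hj.
  have tele : forall l i, Nm H (fun x => h l x - h (l + i)%N x) <= 4 * M * w R l * (1 - w R i).
    move=> l; elim=> [|i IH].
      rewrite addn0 w0 subrr mulr0.
      rewrite (_ : (fun x => h l x - h l x) = (fun _ => 0)) ?Nm0 //.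
      by rewrite funeqE => x; rewrite subrr.
    rewrite addnS hS.
    rewrite (_ : (fun x => h l x - (h (l + i)%N x - e ((l + i)%N, h (l + i)%N) x)) =
       (fun x => (h l x - h (l + i)%N x) + e ((l + i)%N, h (l + i)%N) x)); last first.
      by rewrite funeqE => x; exact: rE1.
    have [cl _] := inv l; have [cli _] := inv (l + i)%N.
    apply: le_trans (Nm_add (C_sub (hC _ cl) (hC _ cli)) (hC _ (ce _))) _.
    have := gb (l + i)%N; rewrite wD wS => g1.
    suff -> : 4 * M * w R l * (1 - w R i / 2) =
      4 * M * w R l * (1 - w R i) + 2 * M * (w R l * w R i) by apply: lerD.
    exact: rE4.
  have tele' : forall l i, Nm H (fun x => h l x - h (l + i)%N x) <= 4 * M * w R l.
    move=> l i; apply: le_trans (tele l i) _.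
    have := w_gt0 R i; have := w_gt0 R l => a b.
    have : 0 <= 4 * M * w R l * w R i by rewrite !mulr_ge0 // ltW.
    lra.
  have ch : forall n, continuous (fun x => f x - h n x).
    by move=> n; apply: cont_sub => //; case: (inv n).
  have := @rk_complete _ _ H (fun n x => f x - h n x) (fun n => hC _ (ch n)).
  case.
    move=> e0 e0pos.
    have pos8 : 0 < 8 * M + 1 by lra.
    have [N0 hN0] := small_inv (divr_gt0 e0pos pos8).
    exists N0 => m n hm hn.
    change (Nm H (fun x => (f x - h m x) - (f x - h n x)) < e0).
    rewrite (_ : (fun x => (f x - h m x) - (f x - h n x)) = (fun x => h n x - h m x)); last first.
      by rewrite funeqE => x; exact: rE2.
    have [cm _] := inv m; have [cn _] := inv n; have [cN _] := inv N0.
    apply: le_lt_trans (Nm_tri (hC _ cn) (hC _ cm) (hC _ cN)) _.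
    rewrite Nm_subC; [|exact: hC|exact: hC].
    have t1 := tele' N0 (n - N0)%N; have t2 := tele' N0 (m - N0)%N.
    rewrite subnKC // in t1; rewrite subnKC // in t2.
    have wl := w_le R N0.
    have x0 : 0 < (N0.+1%:R)^-1 :> R by rewrite invr_gt0.
    move: hN0; rewrite ltr_pdivlMr; last lra.
    move=> hN0.
    have : M * w R N0 <= M * (N0.+1%:R)^-1 by rewrite ler_wpM2l.
    set y := (N0.+1%:R)^-1 in wl x0 hN0 *; set z := w R N0 in wl t1 t2 *; nra.
  move=> G [cG hG].
  have Gf : G = f.
    rewrite funeqE => x; apply/eqP; rewrite -subr_eq0; apply/eqP; apply: eq0_small => e0 e0pos.
    have [C hCx] := rk_eval_cont H x.
    have [N1 hN1] := hG (e0 / 2 / (`|C| + 1)) (divr_gt0 (divr_gt0 e0pos (ltr0Sn _ 1)) (ltr_wpDl (normr_ge0 C) ltr01)).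
    have [N2 hN2] := small_inv (divr_gt0 e0pos (mulr_gt0 (ltr0Sn _ 1) r0)).
    pose n := maxn N1 N2.
    have := hN1 n (leq_maxl _ _); have [cn hn] := inv n.
    have hv := hCx _ (C_sub (hC _ (ch n)) cG); rewrite /= in hv.
    change (Num.sqrt (rk_ip H (fun x => f x - h n x - G x) (fun x => f x - h n x - G x)))
      with (Nm H (fun x => f x - h n x - G x)) in hv.
    move=> hN.
    have wn : w R n <= (N2.+1%:R)^-1 := le_trans (w_le R n) (inv_mono R (leq_maxr _ _)).
    have hnx := hn x.
    have := dist3 (G x) (f x - h n x) (f x) (f x).
    rewrite subrr normr0 addr0.
    rewrite rE3.
    rewrite normrN distrC => hd.
    have hCn : C * Nm H (fun x => f x - h n x - G x) <= `|C| * Nm H (fun x => f x - h n x - G x).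
      by rewrite ler_wpM2r ?Nm_ge0 ?ler_norm.
    have Nn0 := Nm_ge0 H (fun x => f x - h n x - G x).
    move: hN; rewrite ltr_pdivlMr ?(ltr_wpDl (normr_ge0 C) ltr01) // => hN.
    move: hN2; rewrite ltr_pdivlMr ?mulr_gt0 // => hN2.
    have : r * w R n <= r * (N2.+1%:R)^-1 by rewrite ler_wpM2l // ltW.
    have := normr_ge0 C.
    move=> c0 rw; rewrite (distrC (G x)) in hd.
    rewrite /Nm in hv hCn Nn0.
    set a := Num.sqrt _ in hv hCn Nn0 hN; set y := (N2.+1%:R)^-1 in wn hN2 rw; set z := w R n in wn hnx rw.
    nra.
  apply: le_small => e0 e0pos.
  have [N1 hN1] := hG e0 e0pos.
  have hN : Nm H (fun x => f x - h N1 x - G x) < e0 := hN1 N1 (leqnn _).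
  rewrite Nm_subC in hN; [|exact: (hC _ (ch N1))|exact: cG].
  have hN1' := Nm_tri cG (rk_zero H) (hC _ (ch N1)).
  rewrite (_ : (fun x => G x - 0) = G) in hN1'; last by rewrite funeqE => x; rewrite subr0.
  rewrite (_ : (fun x => f x - h N1 x - 0) = (fun x => h 0%N x - h (0 + N1)%N x)) in hN1'; last first.
    by rewrite funeqE => x; rewrite subr0.
  have := tele' 0%N N1; rewrite w0 mulr1.
  rewrite -Gf; lra.
exists (4 * M / r) => f cf hf.
have := step3 (fun x => r * f x) (cont_scale (c:=r) cf).
rewrite Nm_scale; last exact: hC.
rewrite gtr0_norm // => hh.
have : forall x, `|r * f x| <= r.
  by move=> x; rewrite normrM gtr0_norm // ler_piMr // ltW.
move=> /hh hr'; rewrite ler_pdivlMr // mulrC. exact: hr'.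
Qed.


Lemma greedy (R : realType) (X : pseudoMetricType R) (H : RKHS R X)
  (hC : forall f : X -> R, continuous f -> rk_carrier H f)
  (phi : nat -> X -> R) (U : nat -> set X) (m : nat) (c : R) :
  (forall i, continuous (phi i)) -> (forall i y, `|phi i y| <= 1) ->
  (forall i y, phi i y != 0 -> U i y) ->
  (forall i j y, (i < m)%N -> (j < m)%N -> i <> j -> U i y -> U j y -> False) ->
  (forall i, (i < m)%N -> 1 <= c * rk_ip H (phi i) (phi i)) -> 0 <= c ->
  forall k, (k <= m)%N -> exists S, [/\ continuous S, (forall y, `|S y| <= 1),
    (forall y, S y != 0 -> exists2 i, (i < k)%N & U i y) & k%:R <= c * rk_ip H S S].
Proof.
move=> cphi bphi sphi dU lphi c0; elim=> [|k IH] km.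
  exists (fun _ => 0); split.
  - by move=> x; exact: cvg_cst.
  - by move=> y; rewrite normr0.
  - by move=> y; rewrite eqxx.
  - by rewrite ip0l ?mulr0 //; exact: rk_zero.
have [S [cS bS sS lS]] := IH (ltnW km).
pose a := rk_ip H (phi k) S.
pose eps : R := if 0 <= a then 1 else -1.
have e2 : eps ^+ 2 = 1 by rewrite /eps; case: ifP => _; rewrite ?expr1n ?sqrrN ?expr1n.
have ea : 0 <= eps * a.
  rewrite /eps; case: ifP => h; first by rewrite mul1r.
  by rewrite mulN1r oppr_ge0; move/negbT: h; rewrite -ltNge => /ltW.
have ne : `|eps| = 1 by rewrite /eps; case: ifP => _; rewrite ?normrN normr1.
exists (fun y => eps * phi k y + S y); split.
- by apply: cont_add => //; exact: cont_scale.
- move=> y; have [->|pn] := eqVneq (phi k y) 0.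
    by rewrite mulr0 add0r.
  have Uk := sphi _ _ pn.
  have [Sy0|Sn] := eqVneq (S y) 0.
    by rewrite Sy0 addr0 normrM ne mul1r.
  have [i ik Ui] := sS _ Sn.
  exfalso; apply: (dU i k y) => //; first exact: ltn_trans ik km.
  by move=> ek; rewrite ek ltnn in ik.
- move=> y; have [->|pn] := eqVneq (phi k y) 0.
    rewrite mulr0 add0r => /sS [i ik Ui]; exists i => //; exact: ltnW.
  by move=> _; exists k => //; exact: sphi.
- rewrite Q_lin; [|exact: hC|exact: hC].
  rewrite e2 mul1r -/a.
  have := lphi k km.
  rewrite -natr1.
  have : 0 <= c * (eps * a) by rewrite mulr_ge0.
  move: lS; nra.
Qed.

Lemma fin_eps_seq (R : realType) (P : nat * nat -> R -> Prop) (l : seq (nat * nat)) :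
  (forall p e e', 0 < e' -> e' <= e -> P p e -> P p e') ->
  (forall p, p \in l -> exists2 e, 0 < e & P p e) ->
  exists2 e, 0 < e & forall p, p \in l -> P p e.
Proof.
move=> mono; elim: l => [|p l IH] h.
  by exists 1.
have [e1 e10 h1] : exists2 e, 0 < e & forall q, q \in l -> P q e.
  by apply: IH => q ql; apply: h; rewrite in_cons ql orbT.
have [e2 e20 h2] := h p (mem_head _ _).
exists (Num.min e1 e2); first by rewrite lt_min e10 e20.
move=> q; rewrite in_cons => /orP[/eqP->|ql].
  by apply: mono h2; rewrite ?lt_min ?e10 ?e20 // ge_min lexx orbT.
by apply: mono (h1 q ql); rewrite ?lt_min ?e10 ?e20 // ge_min lexx.
Qed.

Lemma fin_eps (R : realType) (Q : nat -> nat -> R -> Prop) (m : nat) :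
  (forall i j e e', 0 < e' -> e' <= e -> Q i j e -> Q i j e') ->
  (forall i j, (i < m)%N -> (j < m)%N -> i <> j -> exists2 e, 0 < e & Q i j e) ->
  exists2 e, 0 < e & forall i j, (i < m)%N -> (j < m)%N -> i <> j -> Q i j e.
Proof.
move=> mono h.
have [e e0 he] : exists2 e, 0 < e & forall p, p \in [seq (i, j) | i <- iota 0 m, j <- iota 0 m] ->
    (p.1 <> p.2 -> Q p.1 p.2 e).
  apply: (@fin_eps_seq R (fun p e => p.1 <> p.2 -> Q p.1 p.2 e)).
- by move=> p e e' e'0 le hp ne; apply: mono (hp ne).
- move=> p /allpairsP [[i j] [/= hi hj ->]] /=.
  rewrite !mem_iota /= in hi hj.
  have [ij|nij] := eqVneq i j; first by exists 1.
  by have [e e0 hq] := h i j hi hj (fun E => (negP nij) (introT eqP E)) ; exists e.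
exists e => // i j hi hj nij.
apply: (he (i, j)) => //.
by apply/allpairsP; exists (i, j); rewrite !mem_iota.
Qed.


Unset Implicit Arguments.

Theorem theorem1 (R : realType) (X : pseudoMetricType R) :
  hausdorff_space X -> compact [set: X] -> ~ countable [set: X] ->
  ~ (exists H : RKHS R X,
       forall f : X -> R, continuous f -> rk_carrier H f).
Proof.
move=> hT cX ncount [H hC].
have [K hK] := bound hC.
have [Cf hCf] := choice (rk_eval_cont H).
pose S (n : nat) := [set x | Cf x <= n%:R].
have [n infS] : exists n, infinite_set (S n).
  apply: contrapT => hno; apply: ncount.
  have -> : [set: X] = \bigcup_(n in [set: nat]) S n.
    apply/seteqP; split => x // _; exists (Num.truncn (Cf x)).+1 => //.
    by rewrite /S /=; exact: ltW (truncnS_gt _).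
  apply: bigcup_countable; first exact: countableP.
  move=> i _; apply: finite_set_countable; apply: contrapT => hi; apply: hno; by exists i.
pose m := (Num.truncn (n%:R ^+ 2 * K ^+ 2)).+1.
have [B BS mB] := infinite_set_fset m infS.
set s := finmap.enum_fset B in mB.
have us : uniq s by exact: finmap.fset_uniq.
have x0 : X.
  move: mB; case E: s => [|a l] //= _; exact: a.
pose msz := size s.
pose xs i := nth x0 s i.
have xsS : forall i, (i < msz)%N -> Cf (xs i) <= n%:R.
  move=> i hi; apply: (BS (xs i)); exact: mem_nth.
have xsD : forall i j, (i < msz)%N -> (j < msz)%N -> i <> j -> xs i != xs j.
  by move=> i j hi hj nij; rewrite /xs nth_uniq //; apply/eqP.
have hB := hT; rewrite ball_hausdorff in hB.
pose Q i j (e : R) := ball (xs i) e `&` ball (xs j) e = set0.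
have [e e0 hdisj] : exists2 e, 0 < e & forall i j, (i < msz)%N -> (j < msz)%N -> i <> j -> Q i j e.
  apply: fin_eps.
    move=> i j e e' e'0 le hq; rewrite /Q -subset0 => y [h1 h2].
    have : (ball (xs i) e `&` ball (xs j) e) y by split; apply: le_ball h1 || apply: le_ball h2.
    by rewrite hq.
  move=> i j hi hj nij; have [[r1 r2] /eqP hr] := hB _ _ (xsD i j hi hj nij).
  exists (Num.min r1%:num r2%:num); first by rewrite lt_min !gt0.
  rewrite /Q -subset0 => y [h1 h2].
  have : (ball (xs i) r1%:num `&` ball (xs j) r2%:num) y.
    by split; [apply: le_ball h1; rewrite ge_min lexx | apply: le_ball h2; rewrite ge_min lexx orbT].
  by rewrite hr.
pose U i := (ball (xs i) e)°.
have sep : forall i, uniform_separator [set xs i] (~` U i).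
  move=> i; apply: point_uniform_separator => //.
    by rewrite closedC; exact: open_interior.
  by move=> /(_ (nbhsx_ballx (xs i) e e0)).
pose phi i := fun y => 1 - @Urysohn X R [set xs i] (~` U i) y.
have cphi : forall i, continuous (phi i).
  move=> i; apply: cont_sub; first by move=> y; exact: cvg_cst.
  exact: Urysohn_continuous.
have bphi : forall i y, `|phi i y| <= 1.
  move=> i y; have := Urysohn_range (imageT (@Urysohn X R [set xs i] (~` U i)) y).
  move=> hI; have : @Urysohn X R [set xs i] (~` U i) y \in `[0, 1]%R := hI.
  rewrite in_itv /= => /andP[h0 h1]; rewrite /phi ler_norml; apply/andP; split; lra.
have sphi : forall i y, phi i y != 0 -> U i y.
  move=> i y; apply: contraNP => nU; apply/eqP.
  have := Urysohn_sub1 (sep i) (ex_intro2 _ _ y nU erefl).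
  by rewrite /phi => ->; rewrite subrr.
have phi1 : forall i, phi i (xs i) = 1.
  move=> i; have := Urysohn_sub0 (sep i) (ex_intro2 _ _ (xs i) erefl erefl).
  by rewrite /phi => ->; rewrite subr0.
have dU : forall i j y, (i < msz)%N -> (j < msz)%N -> i <> j -> U i y -> U j y -> False.
  move=> i j y hi hj nij /interior_subset h1 /interior_subset h2.
  have : (ball (xs i) e `&` ball (xs j) e) y by split.
  by rewrite (hdisj i j hi hj nij).
have lphi : forall i, (i < msz)%N -> 1 <= n%:R ^+ 2 * rk_ip H (phi i) (phi i).
  move=> i hi; have := hCf (xs i) (phi i) (hC _ (cphi i)).
  rewrite phi1 normr1 -/(Nm H (phi i)) => h1.
  have := xsS i hi; have := Nm_ge0 H (phi i); rewrite -(Nm_sq (hC _ (cphi i))).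
  move=> N0 hn; set N := Nm H (phi i) in h1 N0 *; set C := Cf (xs i) in h1 hn.
  have h2 : 1 <= n%:R * N by nra.
  rewrite -exprMn; set y := n%:R * N in h2 *; nra.
have [S' [cS bS _ lS]] := greedy hC cphi bphi sphi dU lphi (sqr_ge0 _) (leqnn msz).
have hKS := hK S' cS bS.
have := Nm_ge0 H S'; rewrite -(Nm_sq (hC _ cS)) in lS => N0.
have : (m <= msz)%N by [].
rewrite -(ler_nat R) => hm.
have := truncnS_gt (n%:R ^+ 2 * K ^+ 2 : R); rewrite -/m => hm2.
set N := Nm H S' in hKS lS N0; set a := n%:R ^+ 2 in lS hm2.
have a0 : 0 <= a by rewrite /a sqr_ge0.
have : N ^+ 2 <= K ^+ 2 by nra.
move=> hNK; have : a * N ^+ 2 <= a * K ^+ 2 by rewrite ler_wpM2l.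
lra.
Qed.
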